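(* For every $i\ge0$, the generating function $g_i(z)=\sum_{n\ge0}b_{n,i}z^n$ of reversed partial ternary paths ending at level $i$ ($b_{n,i}$ the number of such paths of length $n$, no upper height bound) is $$g_i(z)=\frac{(-1)^i z^{2i}}{(1-t)^{i+1}}\sum_{0\le k\le i/2}(-1)^k\binom{i-k}{k}\frac{1}{t^k(t-1)^{i-k}},$$ equivalently $$g_i(z)=\frac{(-1)^iz^{2i}}{(1-t)^{i+1}(3t-4)}\Big[(t-2)(\mu_2^i+\mu_3^i)+(\mu_2^{i-1}+\mu_3^{i-1})\Big],$$ where $t$ is the formal power series in $x=z^3$ with $t(1-t)^2=x$, $t=x+2x^2+\cdots$, and $\mu_{2,3}=\dfrac{t\pm\sqrt{4t-3t^2}}{2t(t-1)}$. In particular $g_i(z)$ has nonzero coefficients only at powers $z^n$ with $n+i\equiv0\pmod 3$.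
   Context: A reversed partial ternary path of length $n$ is a lattice path $(0,c_0),\dots,(n,c_n)$ with $c_0=0$, steps $(1,2)$ or $(1,-1)$, and all $c_j\ge0$; it ends at level $c_n$. *)

(* Defs.v *)
From HB Require Import structures.
From mathcomp Require Import all_boot all_order all_algebra.
Set Implicit Arguments. Unset Strict Implicit. Unset Printing Implicit Defensive.
Import Order.TTheory GRing.Theory Num.Theory.
Local Open Scope ring_scope.

(* A path of length n is encoded by its step sequence: true = (1,2), false = (1,-1). *)
Definition step (c : int) (b : bool) : int := if b then c + 2 else c - 1.

(* the levels c_1, ..., c_n (c_0 = 0 is prepended below) *)
Definition levels (s : seq bool) : seq int := scanl step 0 s.

Definition valid_path (s : seq bool) : bool := all (fun c => 0 <= c) (0 :: levels s).

Definition end_level (s : seq bool) : int := foldl step 0 s.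

Definition b (n i : nat) : nat :=
  #|[pred s : n.-tuple bool | valid_path s && (end_level s == i%:Z)]|.

Definition series := nat -> int.

Definition scst (c : int) : series := fun n => if n == 0%N then c else 0.
Definition sz : series := fun n => if n == 1%N then 1 else 0.
Definition sadd (f g : series) : series := fun n => f n + g n.
Definition sopp (f : series) : series := fun n => - f n.
Definition ssub (f g : series) : series := sadd f (sopp g).
Definition sscale (c : int) (f : series) : series := fun n => c * f n.
Definition smul (f g : series) : series :=
  fun n => \sum_(k < n.+1) f k * g (n - k)%N.
Definition spow (f : series) (m : nat) : series := iter m (smul f) (scst 1).
Definition ssum (m : nat) (F : nat -> series) : series :=
  fun n => \sum_(k < m) F k n.

Definition g (i : nat) : series := fun n => (b n i)%:Z.

(** With nu_{2,3} := mu_{2,3} * t(t-1), the nu's are the roots of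
   Y^2 - t Y + t(t-1) = 0, so P_i := nu_2^i + nu_3^i = (mu_2^i + mu_3^i)(t(t-1))^i
   satisfies P_0 = 2, P_1 = t, P_{i+2} = t P_{i+1} - t(t-1) P_i. *)
Fixpoint Ppair (t : series) (i : nat) : series * series :=
  match i with
  | 0 => (scst 2, t)
  | i'.+1 => let (p0, p1) := Ppair t i' in
             (p1, ssub (smul t p1) (smul (smul t (ssub t (scst 1))) p0))
  end.
Definition Psum (t : series) (i : nat) : series := (Ppair t i).1.

(* Q_i := (mu_2^{i-1} + mu_3^{i-1}) (t(t-1))^i ; for i = 0, mu_2^{-1}+mu_3^{-1} = t *)
Definition Qsum (t : series) (i : nat) : series :=
  match i with
  | 0 => t
  | i'.+1 => smul (smul t (ssub t (scst 1))) (Psum t i')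
  end.

(* Main.v *)
Require Import Defs.
From HB Require Import structures.
From mathcomp Require Import all_boot all_order all_algebra.
From mathcomp Require Import boolp.
From mathcomp Require Import ring zify.
Set Implicit Arguments. Unset Strict Implicit. Unset Printing Implicit Defensive.
Import Order.TTheory GRing.Theory Num.Theory.
Local Open Scope ring_scope.

Definition ser := series.
HB.instance Definition _ := Choice.on ser.

Lemma saddA : associative sadd. Proof. by move=> f g h; apply: funext => n; rewrite /sadd addrA. Qed.
Lemma saddC : commutative sadd. Proof. by move=> f g; apply: funext => n; rewrite /sadd addrC. Qed.
Lemma sadd0 : left_id (scst 0) sadd.
Proof. by move=> f; apply: funext => n; rewrite /sadd /scst; case: (n == 0)%N; rewrite add0r. Qed.
Lemma saddN : left_inverse (scst 0) sopp sadd.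
Proof. by move=> f; apply: funext => n; rewrite /sadd /sopp /scst addNr; case: (n == 0)%N. Qed.

HB.instance Definition _ := GRing.isZmodule.Build ser saddA saddC sadd0 saddN.

Definition Tr (N : nat) (f : series) : {poly int} := \poly_(i < N) f i.

Lemma smul_coefM N f g n : (n < N)%N -> smul f g n = (Tr N f * Tr N g)`_n.
Proof.
move=> hn; rewrite coefM /smul; apply: eq_bigr => j _; rewrite !coef_poly.
have hj : (j < N)%N by apply: leq_ltn_trans hn; rewrite -ltnS.
have hj' : (n - j < N)%N by apply: leq_ltn_trans hn; rewrite leq_subr.
by rewrite hj hj'.
Qed.

Lemma smulC : commutative smul.
Proof.
move=> f g; apply: funext => n.
by rewrite (smul_coefM f g (ltnSn n)) (smul_coefM g f (ltnSn n)) mulrC.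
Qed.

Lemma smul_coef3 f g h n : smul (smul f g) h n = (Tr n.+1 f * Tr n.+1 g * Tr n.+1 h)`_n.
Proof.
rewrite {1}/smul coefM; apply: eq_bigr => j _.
rewrite (smul_coefM (N := n.+1)) //; congr (_ * _).
by rewrite coef_poly ltnS leq_subr.
Qed.

Lemma smulA : associative smul.
Proof.
move=> f g h; apply: funext => n.
by rewrite smul_coef3 smulC smul_coef3 mulrC mulrA.
Qed.

Lemma smul1 : left_id (scst 1) smul.
Proof.
move=> f; apply: funext => n.
rewrite (smul_coefM _ _ (ltnSn n)).
have -> : Tr n.+1 (scst 1) = 1.
  apply/polyP => i; rewrite coef_poly coefC /scst.
  by case: i => [|i] //=; case: ifP.
by rewrite mul1r coef_poly ltnSn.
Qed.

Lemma smulDl : left_distributive smul sadd.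
Proof.
move=> f g h; apply: funext => n.
by rewrite /smul /sadd -big_split /=; apply: eq_bigr => j _; rewrite mulrDl.
Qed.

Lemma one_neq0 : scst 1 != scst 0.
Proof. by apply/eqP => /(congr1 (fun f => f 0%N)). Qed.

HB.instance Definition _ := GRing.Zmodule_isComNzRing.Build ser smulA smulC smul1 smulDl one_neq0.


Lemma addE (f g : ser) n : (f + g) n = f n + g n. Proof. by []. Qed.
Lemma oppE (f : ser) n : (- f) n = - f n. Proof. by []. Qed.
Lemma zeroE n : (0 : ser) n = 0. Proof. by case: n. Qed.

Lemma sumE m (F : nat -> ser) n : (\sum_(k < m) F k) n = \sum_(k < m) F k n.
Proof.
elim: m => [|m IH]; first by rewrite !big_ord0 zeroE.
by rewrite !big_ord_recr /= -IH.
Qed.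

Lemma ssumE m (F : nat -> series) : ssum m F = \sum_(k < m) (F k : ser).
Proof. by apply: funext => n; rewrite sumE. Qed.

Lemma scst_mulE c (f : ser) : (scst c : ser) * f = sscale c f.
Proof.
apply: funext => n; change (smul (scst c) f n = sscale c f n).
rewrite /smul /sscale big_ord_recl /= subn0.
rewrite big1 ?addr0 // => j _; by rewrite /scst /= mul0r.
Qed.

Lemma sscaleE c f : sscale c f = (scst c : ser) * f.
Proof. by rewrite scst_mulE. Qed.

Lemma scstD (a b : int) : scst (a + b) = (scst a : ser) + scst b.
Proof. apply: funext => n; rewrite addE /scst; case: (n == 0)%N => //; by rewrite addr0. Qed.
Lemma scstM (a b : int) : scst (a * b) = (scst a : ser) * scst b.
Proof. apply: funext => n; rewrite scst_mulE /sscale /scst; case: (n == 0)%N => //; by rewrite mulr0. Qed.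
Lemma scstN (a : int) : scst (- a) = - (scst a : ser).
Proof. apply: funext => n; rewrite oppE /scst; case: (n == 0)%N => //; by rewrite oppr0. Qed.
Lemma scst1 : scst 1 = (1 : ser). Proof. by []. Qed.
Lemma scst_nat m : scst m%:R = (m%:R : ser).
Proof. elim: m => [|m IH]; first by []. by rewrite -addn1 !natrD scstD IH. Qed.
Lemma scst_sign k : scst ((-1) ^+ k) = ((-1) ^+ k : ser).
Proof. elim: k => [|k IH]; first by []. by rewrite !exprS scstM scstN IH. Qed.
Lemma scst_natz m : scst (m%:Z) = (m%:R : ser).
Proof. by rewrite -scst_nat natz. Qed.

Lemma spowE (f : ser) m : spow f m = f ^+ m.
Proof. elim: m => [|m IH]; first by []. by rewrite exprS -IH. Qed.

Definition z : ser := sz.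

Lemma coef_zmul (f : ser) n : (z * f) n = if n is n'.+1 then f n' else 0.
Proof.
change (smul sz f n = if n is n'.+1 then f n' else 0).
rewrite /smul big_ord_recl /= /sz /= mul0r add0r.
case: n => [|n]; first by rewrite big_ord0.
rewrite big_ord_recl /= mul1r subSS subn0 big1 ?addr0 // => j _.
by rewrite /bump /= mul0r.
Qed.

Lemma mulzI (f g : ser) : z * f = z * g -> f = g.
Proof.
move=> h; apply: funext => n.
by have := congr1 (fun u : ser => u n.+1) h; rewrite !coef_zmul.
Qed.

Lemma mulzXI i (f g : ser) : z ^+ i * f = z ^+ i * g -> f = g.
Proof.
elim: i => [|i IH]; first by rewrite !mul1r.
by rewrite exprS -!mulrA => /mulzI.
Qed.

Definition sh (f : ser) : ser := fun n => f n.+1.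

Lemma shE (f : ser) : f 0%N = 0 -> f = z * sh f.
Proof. by move=> h0; apply: funext => n; rewrite coef_zmul; case: n. Qed.

Lemma end_rcons s x : end_level (rcons s x) = step (end_level s) x.
Proof. by rewrite /end_level foldl_rcons. Qed.

Lemma valid_rcons s x :
  valid_path (rcons s x) = valid_path s && (0 <= step (end_level s) x).
Proof.
rewrite /valid_path /levels scanl_rcons -rcons_cons all_rcons andbC.
by rewrite -/(end_level (rcons s x)) end_rcons.
Qed.

Lemma valid_end s : valid_path s -> 0 <= end_level s.
Proof.
elim/last_ind: s => [|s x IH]; first by [].
by rewrite valid_rcons end_rcons => /andP[].
Qed.

Lemma card_rcons n (P : pred (seq bool)) :
  #|[pred s : n.+1.-tuple bool | P s]| =
  (#|[pred s : n.-tuple bool | P (rcons s true)]| +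
   #|[pred s : n.-tuple bool | P (rcons s false)]|)%N.
Proof.
pose h (p : n.-tuple bool * bool) : n.+1.-tuple bool := rcons_tuple p.1 p.2.
have hinj : injective h.
  move=> [s x] [s' x'] /(congr1 val) /= /rcons_inj [] /val_inj -> ->.
  by [].
have hbij : bijective h.
  apply: (inj_card_bij hinj).
  by rewrite card_prod !card_tuple card_bool expnS mulnC.
rewrite -!sum1_card (reindex h) /=; last by apply: onW_bij.
rewrite big_mkcond.
rewrite (eq_bigr (fun p => (fun (s : n.-tuple bool) (x : bool) => if P (rcons s x) then 1 else 0)%N p.1 p.2)); last first.
  by move=> [s x] _.
rewrite -(pair_bigA _ (fun (s : n.-tuple bool) (x : bool) => if P (rcons s x) then 1%N else 0%N)) /=.
rewrite exchange_big big_bool /= -!big_mkcond /=.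
by [].
Qed.

Lemma b0 i : b 0 i = (i == 0)%N.
Proof.
rewrite /b; case: i => [|i].
  rewrite (@eq_card _ _ predT) ?card_tuple ?card_bool //.
  by move=> s; rewrite (tuple0 s).
apply: eq_card0 => s; rewrite (tuple0 s) /=.
by rewrite /end_level /=.
Qed.

Lemma bS n i : b n.+1 i = (b n i.+1 + if i is i'.+2 then b n i' else 0)%N.
Proof.
rewrite /b (card_rcons n (fun s => valid_path s && (end_level s == i%:Z))) addnC; congr addn.
  apply: eq_card => s; rewrite !inE valid_rcons end_rcons /step.
  case V: (valid_path s) => //=; have := valid_end V.
  move: (end_level s) => e he.
  apply/idP/idP => [/andP[h1 /eqP h2]|/eqP h]; first by apply/eqP; lia.
  by apply/andP; split; [|apply/eqP]; lia.
case: i => [|[|i]].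
- apply: eq_card0 => s; rewrite !inE valid_rcons end_rcons /step.
  case V: (valid_path s) => //=; have := valid_end V.
  move: (end_level s) => e he; apply/negP => /andP[_ /eqP]; lia.
- apply: eq_card0 => s; rewrite !inE valid_rcons end_rcons /step.
  case V: (valid_path s) => //=; have := valid_end V.
  move: (end_level s) => e he; apply/negP => /andP[_ /eqP]; lia.
apply: eq_card => s; rewrite !inE valid_rcons end_rcons /step.
case V: (valid_path s) => //=; have := valid_end V.
move: (end_level s) => e he.
apply/idP/idP => [/andP[h1 /eqP h2]|/eqP h]; first by apply/eqP; lia.
by apply/andP; split; [|apply/eqP]; lia.
Qed.

Lemma bmod n i : ((n + i) %% 3 != 0)%N -> b n i = 0%N.
Proof.
elim: n i => [|n IH] i.
  by rewrite b0 add0n; case: i.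
rewrite bS => h; rewrite IH; last by move: h; apply: contra; rewrite addSnnS.
case: i h => [|[|i]] h //; rewrite IH //.
by move: h; apply: contra => /eqP h1; apply/eqP; lia.
Qed.

Section Fib.
Variables (R : comRingType) (a c : R).
Definition FS (i : nat) : R := \sum_(0 <= k < i.+1) ('C(i - k, k))%:R * a ^+ (i - k) * c ^+ k.

Lemma FSrec i : FS i.+2 = a * FS i.+1 + a * c * FS i.
Proof.
rewrite /FS big_nat_recl // [in a * _]big_nat_recl // big_nat_recr //=.
rewrite !subn0 !bin0 !expr0 !mulr1 !subSS.
rewrite subnn bin_small // !mul0r addr0 !mul1r ?subSS.
rewrite mulrDr -addrA -exprS; congr (_ + _).
rewrite !mulr_sumr -big_split /=; apply: eq_big_nat => k /andP[_ hk].
rewrite !subSS; have -> : (i.+1 - k = (i - k).+1)%N by lia.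
rewrite binS natrD !exprS; ring.
Qed.

Lemma fib (F : nat -> R) : F 0%N = 1 -> F 1%N = a ->
  (forall i, F i.+2 = a * F i.+1 + a * c * F i) -> forall i, F i = FS i.
Proof.
move=> h0 h1 hr i.
suff : F i = FS i /\ F i.+1 = FS i.+1 by case.
elim: i => [|i [IH1 IH2]].
  rewrite h0 h1 /FS !big_nat_recl // !big_geq //=.
  by split; rewrite ?subn0 ?subnn ?bin0 ?bin0n /=; ring.
split => //; by rewrite hr FSrec IH1 IH2.
Qed.
End Fib.

Section Alg.
Variable t : ser.
Hypothesis ht0 : t 0%N = 0.
Hypothesis ht : t * (1 - t) ^+ 2 = z ^+ 3.
Local Notation w := (1 - t).

Definition s : ser := sh (sh (sh t)).

Lemma zcoef0 (f : ser) : (z * f) 0%N = 0.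
Proof. by rewrite coef_zmul. Qed.

Lemma t3 : t = z * (z * (z * s)).
Proof.
have e1 : t = z ^+ 3 + t ^+ 2 * (2%:R - t) by rewrite -{1}ht; ring.
set u := sh t.
have h1 : t = z * u by apply: shE.
have e2 : t = z * (z * (z + u ^+ 2 * (2%:R - t))).
  by rewrite {1}e1 {1}h1; ring.
have u0 : u 0%N = 0.
  by rewrite /u /sh; have := congr1 (fun f : ser => f 1%N) e2; rewrite coef_zmul zcoef0.
set v := sh u.
have h2 : u = z * v by apply: shE.
have e3 : t = z * (z * (z * (1 + z * v ^+ 2 * (2%:R - t)))).
  by rewrite {1}e1 {1}h1 {1}h2; ring.
have v0 : v 0%N = 0.
  by rewrite /v /u /sh; have := congr1 (fun f : ser => f 2%N) e3; rewrite !coef_zmul.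
have h3 : v = z * s by apply: shE.
by rewrite {1}h1 {1}h2 h3.
Qed.

Lemma tE : t = z ^+ 3 * s.
Proof. by rewrite {1}t3; ring. Qed.

Lemma sw2 : s * w ^+ 2 = 1.
Proof.
apply: (@mulzXI 3); rewrite mulr1 -{2}ht tE; ring.
Qed.


Fixpoint J (i : nat) : ser :=
  match i with
  | 0 => 1
  | p.+1 => match p with
            | 0 => z ^+ 2 * s
            | q.+1 => z ^+ 2 * s * J p + z * s * w * J q
            end
  end.

Lemma Jrec i : J i.+2 = z ^+ 2 * s * J i.+1 + z * s * w * J i.
Proof. by []. Qed.

Definition G i := s * w * J i.

Lemma G0 : G 0 = 1 + z * G 1.
Proof.
rewrite /G /=; transitivity (s * w ^+ 2 + z * (s * w * (z ^+ 2 * s))); last by rewrite sw2.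
by rewrite [in LHS]tE; rewrite [in RHS]tE; ring.
Qed.

Lemma G1 : G 1 = z * G 2.
Proof. by rewrite /G Jrec /= tE; ring. Qed.

Lemma GS i : G i.+2 = z * G i.+3 + z * G i.
Proof.
rewrite /G [J i.+3]Jrec [J i.+2]Jrec.
have e : z * (s * w * J i) = z * (s * w * (s * w ^+ 2) * J i) by rewrite sw2 mulr1.
rewrite e tE; ring.
Qed.

Lemma gG n i : g i n = G i n.
Proof.
elim: n i => [|n IH] i.
  rewrite /g b0; case: i => [|[|i]].
  - by rewrite G0 addE zcoef0.
  - by rewrite G1 zcoef0.
  - by rewrite GS addE !zcoef0.
rewrite /g bS PoszD; case: i => [|[|i]].
- by rewrite G0 addE coef_zmul -IH addr0.
- by rewrite G1 coef_zmul -IH addr0.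
- by rewrite GS addE !coef_zmul -!IH.
Qed.

Lemma gw i : (g i : ser) * w = J i.
Proof.
have -> : (g i : ser) = G i by apply: funext => n; rewrite gG.
rewrite /G; transitivity (s * w ^+ 2 * J i); first by ring. by rewrite sw2 mul1r.
Qed.


Lemma K_fib i : z ^+ i * J i = FS t w i.
Proof.
apply: (@fib _ t w (fun i => z ^+ i * J i)) => /=.
- by rewrite mul1r.
- by rewrite tE; ring.
- move=> j; change (z ^+ j.+2 * J j.+2 = t * (z ^+ j.+1 * J j.+1) + t * w * (z ^+ j * J j)).
  by rewrite Jrec tE !exprS; ring.
Qed.

Lemma Ppair_fst i : (Ppair t i.+1).1 = (Ppair t i).2.
Proof. by rewrite /=; case: (Ppair t i). Qed.

Lemma Ppair_snd i : (Ppair t i.+1).2 =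
  t * (Ppair t i).2 - (t * (t - 1)) * (Ppair t i).1.
Proof. by rewrite /=; case: (Ppair t i). Qed.

Local Notation Pn i := (Psum t i : ser).
Local Notation Qn i := (Qsum t i : ser).
Lemma P0 : Pn 0 = 2%:R. Proof. by rewrite /Psum /= scst_nat. Qed.
Lemma P1 : Pn 1 = t. Proof. by []. Qed.
Lemma PS i : Pn i.+2 = t * Pn i.+1 - (t * (t - 1)) * Pn i.
Proof. by rewrite /Psum Ppair_fst Ppair_snd -Ppair_fst. Qed.

Lemma Qaux i : Qn i = t * Pn i - Pn i.+1.
Proof.
case: i => [|i]; first by rewrite P0 P1; change (t = t * 2%:R - t); ring.
change (t * (t - 1) * Pn i = t * Pn i.+1 - Pn i.+2).
by rewrite PS; ring.
Qed.

Lemma RQ i : (t - 2%:R) * Pn i + Qn i = (3%:R * t - 4%:R) * FS t w i.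
Proof.
suff : (t - 2%:R) * Pn i + Qn i = (3%:R * t - 4%:R) * FS t w i /\
       (t - 2%:R) * Pn i.+1 + Qn i.+1 = (3%:R * t - 4%:R) * FS t w i.+1 by case.
elim: i => [|i [IH1 IH2]].
  rewrite (Qaux 0) (Qaux 1) !PS P1 P0.
  rewrite /FS !big_nat_recl // !big_geq //= ?subn0 ?subnn ?bin0 ?bin0n /=.
  by split; ring.
split => //.
rewrite FSrec.
have -> : (t - 2%:R) * Pn i.+2 + Qn i.+2 =
   t * ((t - 2%:R) * Pn i.+1 + Qn i.+1) + t * w * ((t - 2%:R) * Pn i + Qn i).
  rewrite Qaux (Qaux i.+1) (Qaux i) !PS; ring.
by rewrite IH1 IH2; ring.
Qed.

End Alg.

Lemma FS_floor (R : comRingType) (a c : R) i :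
  a ^+ (i./2) * FS a c i =
  a ^+ i * \sum_(k < (i./2).+1) ('C(i - k, k))%:R * (a ^+ (i./2 - k) * c ^+ k).
Proof.
have hi := odd_double_half i; rewrite -muln2 in hi.
have ho := leq_b1 (odd i).
move: (odd i : nat) hi ho => o hi ho.
rewrite /FS big_mkord (big_ord_widen i.+1 (fun k => ('C(i - k, k))%:R * (a ^+ (i./2 - k) * c ^+ k))); last by lia.
rewrite !mulr_sumr [in RHS]big_mkcond /=; apply: eq_bigr => k _.
case: ifP => hk.
  have -> : a ^+ i * ('C(i - k, k)%:R * (a ^+ (i./2 - k) * c ^+ k)) =
            'C(i - k, k)%:R * a ^+ (i + (i./2 - k)) * c ^+ k by rewrite exprD; ring.
  have -> : (i + (i./2 - k) = i./2 + (i - k))%N by lia.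
  by rewrite exprD; ring.
rewrite bin_small ?mul0r ?mulr0 //.
have := ltn_ord k; lia.
Qed.

Lemma mulE (f g : ser) : smul f g = f * g. Proof. by []. Qed.
Lemma saddE (f g : ser) : sadd f g = f + g. Proof. by []. Qed.
Lemma ssubE (f g : ser) : ssub f g = f - g. Proof. by []. Qed.
Lemma szE : sz = z. Proof. by []. Qed.
Lemma sign2 (R : comRingType) k : (-1) ^+ k * (-1) ^+ k = 1 :> R.
Proof. by rewrite -exprMn mulrNN mulr1 expr1n. Qed.

Lemma z3i (t : ser) i : t * (1 - t) ^+ 2 = z ^+ 3 ->
  z ^+ i * z ^+ (2 * i) = t ^+ i * ((1 - t) ^+ i * (1 - t) ^+ i).
Proof.
move=> ht; rewrite -exprD -exprMn -expr2 -exprMn ht -exprM.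
by congr (_ ^+ _); lia.
Qed.

Lemma main_all (t : ser)
  (ht0 : t 0%N = 0)
  (ht : smul t (spow (ssub (scst 1) t) 2) = spow sz 3) :
  forall i : nat,
    smul (smul (smul (g i) (spow (ssub (scst 1) t) i.+1)) (spow t i./2))
         (spow (ssub t (scst 1)) i)
    = sscale ((-1) ^+ i) (smul (spow sz (2 * i)%N)
        (ssum (i./2).+1 (fun k =>
           sscale ((-1) ^+ k * ('C(i - k, k))%N%:Z)
             (smul (spow t (i./2 - k)%N) (spow (ssub t (scst 1)) k)))))
    /\
    smul (smul (smul (g i) (spow (ssub (scst 1) t) i.+1))
               (ssub (sscale 3 t) (scst 4)))
         (spow (smul t (ssub t (scst 1))) i)
    = sscale ((-1) ^+ i) (smul (spow sz (2 * i)%N)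
        (sadd (smul (ssub t (scst 2)) (Psum t i)) (Qsum t i)))
    /\
    (forall n : nat, ((n + i) %% 3 != 0)%N -> b n i = 0%N).
Proof.
move: ht; rewrite !spowE mulE ssubE scst1 szE => ht i.
have hJ := gw ht0 ht i.
have hK := K_fib ht0 ht i.
have hz := z3i i ht.
have e1 : (t : ser) - 1 = -1 * (1 - t) by ring.
split; last split; last by move=> n; apply: bmod.
- rewrite ssumE.
  under eq_bigr => k _ do rewrite sscaleE scstM scst_sign scst_natz !spowE ?ssubE ?scst1 mulE e1 exprMn.
  rewrite !sscaleE scst_sign !spowE ?ssubE !mulE ?scst1 ?szE e1.
  apply: (@mulzXI i).
  have -> : \sum_(k < (i./2).+1) (-1) ^+ k * ('C(i - k, k))%:R * (t ^+ (i./2 - k) * ((-1) ^+ k * (1 - t) ^+ k))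
          = \sum_(k < (i./2).+1) ('C(i - k, k))%:R * (t ^+ (i./2 - k) * (1 - t) ^+ k).
    apply: eq_bigr => k _; transitivity ((-1) ^+ k * (-1) ^+ k * ('C(i - k, k))%:R * (t ^+ (i./2 - k) * (1 - t) ^+ k)); first ring.
    by rewrite sign2 mul1r.
  transitivity ((-1) ^+ i * ((1 - t) ^+ i * (1 - t) ^+ i) * (t ^+ i./2 * (z ^+ i * J t i))).
    by rewrite -hJ exprMn exprS; ring.
  rewrite hK FS_floor.
  transitivity ((-1) ^+ i * (t ^+ i * ((1 - t) ^+ i * (1 - t) ^+ i)) *
    \sum_(k < i./2.+1) 'C(i - k, k)%:R * (t ^+ (i./2 - k) * (1 - t) ^+ k)); first by ring.
  by rewrite -hz; ring.
- rewrite !sscaleE scst_sign !spowE ?ssubE !mulE ?saddE ?ssubE ?scst1 ?szE !scst_nat e1 RQ.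
  apply: (@mulzXI i).
  transitivity ((z ^+ i * J t i) * (1 - t) ^+ i * (3%:R * t - 4%:R) * (t ^+ i * ((-1) ^+ i * (1 - t) ^+ i))).
    by rewrite -hJ !exprMn exprS; ring.
  rewrite hK.
  transitivity ((-1) ^+ i * (z ^+ i * z ^+ (2 * i)) * ((3%:R * t - 4%:R) * FS t (1 - t) i)); last by ring.
  by rewrite hz; ring.
Qed.

Unset Implicit Arguments.
Theorem mainTheorem7 (t : series)
  (ht0 : t 0%N = 0)
  (ht : smul t (spow (ssub (scst 1) t) 2) = spow sz 3) :
  forall i : nat,
    smul (smul (smul (g i) (spow (ssub (scst 1) t) i.+1)) (spow t i./2))
         (spow (ssub t (scst 1)) i)
    = sscale ((-1) ^+ i) (smul (spow sz (2 * i)%N)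
        (ssum (i./2).+1 (fun k =>
           sscale ((-1) ^+ k * ('C(i - k, k))%N%:Z)
             (smul (spow t (i./2 - k)%N) (spow (ssub t (scst 1)) k)))))
    /\
    smul (smul (smul (g i) (spow (ssub (scst 1) t) i.+1))
               (ssub (sscale 3 t) (scst 4)))
         (spow (smul t (ssub t (scst 1))) i)
    = sscale ((-1) ^+ i) (smul (spow sz (2 * i)%N)
        (sadd (smul (ssub t (scst 2)) (Psum t i)) (Qsum t i)))
    /\
    (forall n : nat, ((n + i) %% 3 != 0)%N -> b n i = 0%N).
Proof. exact: main_all. Qed.
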